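(* Let $\mu\in\mathbb{R}^N$, $\nu\in\mathbb{R}^M$ be nonnegative vectors with $\sum_i\mu_i=\sum_j\nu_j$, let $c\in\mathbb{R}^{N\times M}$ and $\gamma>0$. Define the map $T:(\alpha,\beta)\mapsto(\alpha',\beta')$ on $\mathbb{R}^N\times\mathbb{R}^M$ by \[ \pi_{ij}=\tfrac1\gamma(\alpha_i+\beta_j-c_{ij})_+,\quad f_i=-\gamma\Bigl(\sum_j\pi_{ij}-\mu_i\Bigr),\quad g_j=-\gamma\Bigl(\sum_i\pi_{ij}-\nu_j\Bigr), \] \[ \alpha'_i=\alpha_i+\tfrac1M\Bigl(f_i-\tfrac{1}{2N}\textstyle\sum_{k}f_k\Bigr),\qquad \beta'_j=\beta_j+\tfrac1N\Bigl(g_j-\tfrac{1}{2M}\textstyle\sum_{l}g_l\Bigr). \] If $(\alpha,\beta)$ is a fixed point of $T$, then the matrix $\pi=(\alpha\oplus\beta-c)_+/\gamma$ is an optimal solution of \[ \min\Bigl\{\sum_{i,j}c_{ij}\pi_{ij}+\tfrac\gamma2\|\pi\|_2^2:\ \pi\in\mathbb{R}^{N\times M},\ \pi\ge0,\ \pi\mathbf 1=\mu,\ \pi^T\mathbf 1=\nu\Bigr\}. \]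
   Context: $(\alpha\oplus\beta)_{ij}:=\alpha_i+\beta_j$, $t_+=\max(t,0)$ applied entrywise, $\|\pi\|_2$ is the Frobenius norm, $\mathbf 1$ is the all-ones vector of appropriate size, and $\pi\ge 0$ is meant entrywise. *)

(* Defs.v *)
(* R is an arbitrary real field (the statement is purely
   algebraic/order-theoretic, so this generalizes the real numbers). *)
From HB Require Import structures.
From mathcomp Require Import all_boot all_order all_algebra.
Set Implicit Arguments. Unset Strict Implicit. Unset Printing Implicit Defensive.
Import Order.TTheory GRing.Theory Num.Theory.
Local Open Scope ring_scope.

Definition pospart {R : realFieldType} (t : R) : R := Num.max t 0.

Definition plan {R : realFieldType} {N M : nat} (gamma : R)
  (c : 'M[R]_(N, M)) (alpha : 'cV[R]_N) (beta : 'cV[R]_M) : 'M[R]_(N, M) :=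
  \matrix_(i < N, j < M) (pospart (alpha i 0 + beta j 0 - c i j) / gamma).

Definition Tmap {R : realFieldType} {N M : nat} (gamma : R)
  (mu : 'cV[R]_N) (nu : 'cV[R]_M) (c : 'M[R]_(N, M))
  (alpha : 'cV[R]_N) (beta : 'cV[R]_M) : 'cV[R]_N * 'cV[R]_M :=
  let pi := plan gamma c alpha beta in
  let f := fun i : 'I_N => - gamma * (\sum_(j < M) pi i j - mu i 0) in
  let g := fun j : 'I_M => - gamma * (\sum_(i < N) pi i j - nu j 0) in
  (\col_(i < N) (alpha i 0 + M%:R^-1 * (f i - (2 * N%:R)^-1 * \sum_(k < N) f k)),
   \col_(j < M) (beta j 0 + N%:R^-1 * (g j - (2 * M%:R)^-1 * \sum_(l < M) g l))).

Definition ot_obj {R : realFieldType} {N M : nat} (gamma : R)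
  (c : 'M[R]_(N, M)) (pi : 'M[R]_(N, M)) : R :=
  \sum_(i < N) \sum_(j < M) c i j * pi i j
  + gamma / 2 * \sum_(i < N) \sum_(j < M) pi i j ^+ 2.

Definition feasible {R : realFieldType} {N M : nat}
  (mu : 'cV[R]_N) (nu : 'cV[R]_M) (pi : 'M[R]_(N, M)) : Prop :=
  (forall i j, 0 <= pi i j) /\
  pi *m const_mx 1 = mu /\ pi^T *m const_mx 1 = nu.

(* Main.v *)
Require Import Defs.
From HB Require Import structures.
From mathcomp Require Import all_boot all_order all_algebra.
From mathcomp Require Import ring lra.
Import Order.TTheory GRing.Theory Num.Theory.
Local Open Scope ring_scope.

Lemma sum_fix (R : realFieldType) n (F : 'I_n -> R) :
  (forall i, F i - (2 * n%:R)^-1 * \sum_(k < n) F k = 0) -> forall i, F i = 0.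
Proof.
move=> H i.
have n0 : (0 < n)%N := leq_ltn_trans (leq0n _) (ltn_ord i).
have nR : n%:R != 0 :> R by rewrite pnatr_eq0 (gtn_eqF n0).
have HS : \sum_(k < n) F k = 0.
  have E : \sum_(k < n) (F k - (2 * n%:R)^-1 * \sum_(k < n) F k) = 0.
    by rewrite big1.
  rewrite sumrB sumr_const card_ord -mulr_natr in E.
  set S := \sum_(k < n) F k in E *.
  have : S / 2 = 0.
    rewrite -E; field; rewrite nR //.
  lra.
by have := H i; rewrite HS mulr0 subr0.
Qed.

Lemma pt (R : realFieldType) (g a b cc q : R) : 0 < g -> 0 <= q ->
  cc * (pospart (a+b-cc)/g) + g/2*(pospart (a+b-cc)/g)^+2
    + (a+b)*(q-(pospart (a+b-cc)/g)) <= cc*q + g/2*q^+2.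
Proof.
move=> g0 q0; rewrite /pospart /Order.max.
case: ifP => h.
  rewrite mul0r; nra.
move/negbT: h; rewrite -leNgt => h.
set p := (a + b - cc) / g.
have hp : a + b = cc + g * p by rewrite /p mulrC divfK ?gt_eqF //; lra.
rewrite hp.
have := sqr_ge0 (q - p); nra.
Qed.

Lemma objE (R : realFieldType) N M (gamma : R) (c pi : 'M[R]_(N, M)) :
  ot_obj gamma c pi = \sum_(i < N) \sum_(j < M) (c i j * pi i j + gamma/2 * pi i j ^+ 2).
Proof.
rewrite /ot_obj mulr_sumr -big_split; apply eq_bigr => i _.
by rewrite mulr_sumr -big_split.
Qed.

Lemma sum_le_aux (R : realFieldType) N M (F G H : 'I_N -> 'I_M -> R) :
  \sum_(i < N) \sum_(j < M) H i j = 0 -> (forall i j, F i j + H i j <= G i j) ->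
  \sum_(i < N) \sum_(j < M) F i j <= \sum_(i < N) \sum_(j < M) G i j.
Proof.
move=> H0 FG.
have -> : \sum_(i < N) \sum_(j < M) F i j =
  \sum_(i < N) \sum_(j < M) F i j + \sum_(i < N) \sum_(j < M) H i j by rewrite H0 addr0.
rewrite -big_split /=; apply ler_sum => i _; rewrite -big_split; apply ler_sum => j _.
exact: FG.
Qed.

Lemma rowsE (R : realFieldType) N M (pi : 'M[R]_(N, M)) (mu : 'cV[R]_N) :
  pi *m const_mx 1 = mu -> forall i, \sum_(j < M) pi i j = mu i 0.
Proof.
move=> H i; have := congr1 (fun m : 'cV[R]_N => m i 0) H; rewrite mxE => <-.
by apply eq_bigr => j _; rewrite mxE mulr1.
Qed.

Lemma colsE (R : realFieldType) N M (pi : 'M[R]_(N, M)) (nu : 'cV[R]_M) :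
  pi^T *m const_mx 1 = nu -> forall j, \sum_(i < N) pi i j = nu j 0.
Proof.
move=> H j; have := congr1 (fun m : 'cV[R]_M => m j 0) H; rewrite mxE => <-.
by apply eq_bigr => i _; rewrite !mxE mulr1.
Qed.

Theorem mainTheorem9 (R : realFieldType) (N M : nat)
  (mu : 'cV[R]_N) (nu : 'cV[R]_M) (c : 'M[R]_(N, M)) (gamma : R)
  (alpha : 'cV[R]_N) (beta : 'cV[R]_M) :
  (forall i, 0 <= mu i 0) -> (forall j, 0 <= nu j 0) ->
  \sum_(i < N) mu i 0 = \sum_(j < M) nu j 0 ->
  0 < gamma ->
  Tmap gamma mu nu c alpha beta = (alpha, beta) ->
  feasible mu nu (plan gamma c alpha beta) /\
  (forall pi : 'M[R]_(N, M), feasible mu nu pi ->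
     ot_obj gamma c (plan gamma c alpha beta) <= ot_obj gamma c pi).
Proof.
move=> mu0 nu0 Hsum g0 HT.
have pge : forall i j, 0 <= plan gamma c alpha beta i j.
  move=> i j; rewrite mxE divr_ge0 //; last exact: ltW.
  rewrite /pospart /Order.max; case: ifP => h; [by [] | by move/negbT: h; rewrite -leNgt].
rewrite /Tmap in HT; case: HT => Ha Hb.
set p := plan gamma c alpha beta in pge Ha Hb *.
have rows : forall i, \sum_(j < M) p i j = mu i 0.
  move=> i; have [M0|Mpos] := posnP M.
    rewrite big1; last by move=> [j hj] _; exfalso; move: hj; by rewrite M0.
    have S0 : \sum_(j < M) nu j 0 = 0.
      by rewrite big1 // => -[j hj]; exfalso; move: hj; by rewrite M0.
    rewrite -Hsum in S0.
    by symmetry; apply: (psumr_eq0P _ S0) => // k _.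
  have key := @sum_fix R N (fun k => -gamma * (\sum_(j < M) p k j - mu k 0)).
  have := key _ i.
  move=> /(_ _)/eqP; rewrite mulf_eq0 oppr_eq0 (gt_eqF g0) subr_eq0 => /(_ _)/eqP; apply.
  move=> k; have := congr1 (fun m : 'cV[R]_N => m k 0) Ha; rewrite mxE.
  move=> /(congr1 (fun x => x - alpha k 0)); rewrite addrAC subrr add0r => /eqP.
  by rewrite mulf_eq0 invr_eq0 pnatr_eq0 (gtn_eqF Mpos) /= => /eqP.
have cols : forall j, \sum_(i < N) p i j = nu j 0.
  move=> j; have [N0|Npos] := posnP N.
    rewrite big1; last by move=> [i' hi] _; exfalso; move: hi; by rewrite N0.
    have S0 : \sum_(i < N) mu i 0 = 0.
      by rewrite big1 // => -[i hi]; exfalso; move: hi; by rewrite N0.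
    rewrite Hsum in S0.
    by symmetry; apply: (psumr_eq0P _ S0) => // k _.
  have key := @sum_fix R M (fun k => -gamma * (\sum_(i < N) p i k - nu k 0)).
  have := key _ j.
  move=> /(_ _)/eqP; rewrite mulf_eq0 oppr_eq0 (gt_eqF g0) subr_eq0 => /(_ _)/eqP; apply.
  move=> k; have := congr1 (fun m : 'cV[R]_M => m k 0) Hb; rewrite mxE.
  move=> /(congr1 (fun x => x - beta k 0)); rewrite addrAC subrr add0r => /eqP.
  by rewrite mulf_eq0 invr_eq0 pnatr_eq0 (gtn_eqF Npos) /= => /eqP.
split.
  split; first by [].
  split; apply/matrixP => i j; rewrite (ord1 j) !mxE.
    by rewrite -rows; apply eq_bigr => k _; rewrite !mxE mulr1.
  by rewrite -cols; apply eq_bigr => k _; rewrite !mxE mulr1.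
move=> q [qge [qr qc]].
have qrows := rowsE _ _ _ _ _ qr; have qcols := colsE _ _ _ _ _ qc.
rewrite !objE.
apply: (@sum_le_aux R N M _ _ (fun i j => (alpha i 0 + beta j 0) * (q i j - p i j))).
  have E1 : \sum_(i < N) \sum_(j < M) alpha i 0 * (q i j - p i j) = 0.
    rewrite big1 // => i _; rewrite -mulr_sumr sumrB rows qrows subrr mulr0 //.
  have E2 : \sum_(i < N) \sum_(j < M) beta j 0 * (q i j - p i j) = 0.
    rewrite exchange_big big1 // => j _; rewrite -mulr_sumr sumrB cols qcols subrr mulr0 //.
  rewrite (eq_bigr (fun i => \sum_(j < M) alpha i 0 * (q i j - p i j)
                          + \sum_(j < M) beta j 0 * (q i j - p i j))).
    by rewrite big_split E1 E2; apply: addr0.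
  by move=> i _; rewrite -big_split; apply eq_bigr => j _; rewrite mulrDl.
move=> i j /=.
rewrite /p mxE.
exact: pt.
Qed.
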